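(* Let $A$ be an $n\times n$ dilation matrix and let $\mu$ be the smallest singular value of $A$. If $\mu>2\sqrt n$, then $A$ yields a radix representation of $\mathbb{Z}^n$ with digit set $D=A(F)\cap\mathbb{Z}^n$, where $F=[-\tfrac12,\tfrac12)^n$; that is, for every $x\in\mathbb{Z}^n$ there exist $N\ge0$ and $d_0,\dots,d_N\in D$ with $x=\sum_{j=0}^NA^jd_j$.
   Context: A dilation matrix is an $n\times n$ matrix with integer entries all of whose eigenvalues $\lambda$ satisfy $|\lambda|>1$. $D$ is a complete set of coset representatives of $\mathbb{Z}^n/A(\mathbb{Z}^n)$. A matrix $A$ yields a radix representation with digit set $D$ if for every $x_0\in\mathbb{Z}^n$ the Euclidean algorithm $x_j=Ax_{j+1}+r_j$ ($x_{j+1}\in\mathbb{Z}^n$, $r_j\in D$, uniquely determined) terminates, i.e. $x_j=r_j=\mathbf 0$ for all sufficiently large $j$; equivalently every $x\in\mathbb{Z}^n$ is a finite sum $\sum_{j=0}^N A^jd_j$ with $d_j\in D$. *)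

(* Defs.v *)
From HB Require Import structures.
From mathcomp Require Import all_boot all_order all_algebra all_field.
Set Implicit Arguments. Unset Strict Implicit. Unset Printing Implicit Defensive.
Import Order.TTheory GRing.Theory Num.Theory.
Local Open Scope ring_scope.

Definition mxC (n : nat) (A : 'M[int]_n) : 'M[algC]_n :=
  map_mx (fun z : int => z%:~R) A.

Definition vecC (n : nat) (x : 'cV[int]_n) : 'cV[algC]_n :=
  map_mx (fun z : int => z%:~R) x.

(* j-th power of a square integer matrix (works for every n, including 0). *)
Definition mxpow (n : nat) (A : 'M[int]_n) (j : nat) : 'M[int]_n :=
  iter j (mulmx A) 1%:M.

Definition dilation (n : nat) (A : 'M[int]_n) : Prop :=
  forall l : algC, eigenvalue (mxC A) l -> 1 < `|l|.

(* s is a singular value of A: s >= 0 and s^2 is an eigenvalue of A^T A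
   (A is real, so A^T is its conjugate transpose). *)
Definition singular_value (n : nat) (A : 'M[int]_n) (s : algC) : Prop :=
  0 <= s /\ eigenvalue ((mxC A)^T *m mxC A) (s ^+ 2).

Definition in_F (n : nat) (y : 'cV[algC]_n) : Prop :=
  forall i, y i 0 \is Num.real /\ (- (1 / 2%:R) <= y i 0) /\ (y i 0 < 1 / 2%:R).

Definition digit (n : nat) (A : 'M[int]_n) (d : 'cV[int]_n) : Prop :=
  exists y : 'cV[algC]_n, in_F y /\ mxC A *m y = vecC d.

(* Main.v *)
Require Import Defs.
From HB Require Import structures.
From mathcomp Require Import all_boot all_order all_algebra all_field.
Set Implicit Arguments. Unset Strict Implicit. Unset Printing Implicit Defensive.
Import Order.TTheory GRing.Theory Num.Theory Num.Def.
Local Open Scope ring_scope.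

Lemma mxC_conj n (A : 'M[int]_n) : map_mx conjC (mxC A) = mxC A.
Proof. by apply/matrixP => i j; rewrite !mxE rmorph_int. Qed.

Lemma sumnorm_mx n (v : 'cV[algC]_n) :
  \sum_i `|v i 0| ^+ 2 = ((map_mx conjC v^T) *m v) 0 0.
Proof.
rewrite mxE; apply: eq_bigr => i _; rewrite !mxE normCK mulrC //.
Qed.

Lemma sumnorm_row n (u : 'rV[algC]_n) :
  (u *m map_mx conjC u^T) 0 0 = \sum_j `|u 0 j| ^+ 2.
Proof.
rewrite mxE; apply: eq_bigr => i _; rewrite !mxE normCK //.
Qed.

Lemma sumnorm_gt0 n (u : 'rV[algC]_n) : u != 0 -> 0 < \sum_j `|u 0 j| ^+ 2.
Proof.
move=> u0.
have [j uj] : exists j, u 0 j != 0.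
  apply/existsP; apply: contraNT u0 => /existsPn H.
  by apply/eqP/rowP => j; rewrite mxE; apply/eqP; rewrite -[_ == _]negbK H.
rewrite (bigD1 j) //= ltr_wpDr ?sumr_ge0 // => [k _|]; first by rewrite exprn_ge0.
by rewrite exprn_gt0 // normr_gt0.
Qed.

Lemma lemL n (A : 'M[int]_n) :
  (forall s : algC, singular_value A s -> 2%:R * sqrtC n%:R < s) ->
  forall z : 'cV[algC]_n, z != 0 ->
  4%:R * n%:R * \sum_i `|z i 0| ^+ 2 < \sum_i `|(mxC A *m z) i 0| ^+ 2.
Proof.
move=> Hs z z0.
set M := mxC A.
set B := M^T *m M.
have MtC : map_mx conjC M^T = M^T by rewrite map_trmx mxC_conj.
have BC : map_mx conjC B^T = B.
  by rewrite /B trmx_mul trmxK map_mxM MtC map_trmx mxC_conj.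
have Bn : B \is normalmx by apply/normalmxP; rewrite BC.
have HB := orthomx_spectralP Bn.
set P := spectralmx B in HB.
set D := spectral_diag B in HB.
have Pu : P \is unitarymx by apply: spectral_unitarymx.
have Punit : P \in unitmx by apply: spectral_unit.
have Pinv : invmx P = map_mx conjC P^T by apply: invmx_unitary.
have HD : forall i, 4%:R * n%:R < D 0 i.
  move=> i.
  have ev : eigenvalue B (D 0 i).
    apply/eigenvalueP; exists (row i P).
      rewrite -row_mul [in LHS]HB !mulmxA mulmxV // mul1mx row_mul row_diag_mx.
      by rewrite -scalemxAl -rowE.
    apply/eqP => r0.
    have := congr1 (fun X => X *m invmx P) r0.
    rewrite -row_mul mulmxV // mul0mx row1 => /rowP /(_ i).
    by rewrite !mxE => /eqP; rewrite pnatr_eq0 !eqxx.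
  have Dge0 : 0 <= D 0 i.
    move/eigenvalueP: ev => [v vB v0].
    have e1 : (v *m B *m map_mx conjC v^T) 0 0 = D 0 i * \sum_j `|v 0 j| ^+ 2.
      by rewrite vB -scalemxAl mxE sumnorm_row.
    have e2 : (v *m B *m map_mx conjC v^T) 0 0 = \sum_j `|(v *m M^T) 0 j| ^+ 2.
      have eC : map_mx conjC (v *m M^T)^T = M *m map_mx conjC v^T.
        by rewrite trmx_mul trmxK map_mxM mxC_conj.
      by rewrite -sumnorm_row eC /B !mulmxA.
    have : 0 <= \sum_j `|(v *m M^T) 0 j| ^+ 2 by apply: sumr_ge0 => j _; rewrite exprn_ge0.
    by rewrite -e2 e1 pmulr_lge0 // sumnorm_gt0.
  have sv : singular_value A (sqrtC (D 0 i)).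
    by split; [rewrite sqrtC_ge0 | rewrite sqrtCK].
  have h := Hs _ sv.
  have h0 : 0 <= 2%:R * sqrtC n%:R :> algC by rewrite mulr_ge0 // sqrtC_ge0.
  have := ltrXn2r 2 h0 h; rewrite sqrtCK /= => h2.
  have e : (2%:R * sqrtC n%:R) ^+ 2 = 4%:R * n%:R :> algC.
    by rewrite exprMn sqrtCK -natrX.
  by rewrite -e h2.
set w := P *m z.
have PtP : map_mx conjC P^T *m P = 1%:M by rewrite -Pinv mulVmx.
have ew : map_mx conjC w^T = map_mx conjC z^T *m map_mx conjC P^T.
  by rewrite /w trmx_mul map_mxM.
have e1 : \sum_i `|z i 0| ^+ 2 = \sum_k `|w k 0| ^+ 2.
  by rewrite !sumnorm_mx ew -mulmxA (mulmxA _ P) PtP mul1mx.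
have MM : M^T *m M = map_mx conjC P^T *m diag_mx D *m P by rewrite -Pinv -HB.
have e2 : \sum_i `|(M *m z) i 0| ^+ 2 = \sum_k D 0 k * `|w k 0| ^+ 2.
  rewrite sumnorm_mx trmx_mul map_mxM MtC.
  have -> : map_mx conjC z^T *m M^T *m (M *m z) =
            map_mx conjC w^T *m diag_mx D *m w.
    by rewrite ew /w !mulmxA -(mulmxA _ M^T M) MM !mulmxA.
  rewrite mul_mx_diag mxE; apply: eq_bigr => k _; rewrite !mxE normCK.
  by rewrite -mulrA mulrCA; congr (_ * _); rewrite mulrC.
have w0 : w != 0.
  apply: contraNneq z0 => wz.
  by rewrite -(mulKmx Punit z) -/w wz mulmx0.
have [k wk] : exists k, w k 0 != 0.
  apply/existsP; apply: contraNT w0 => /existsPn H.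
  apply/eqP/colP => j; move: (H j); rewrite negbK => /eqP ->.
  by rewrite [RHS]mxE.
rewrite e1 e2 mulr_sumr (bigD1 k) //= [X in _ < X](bigD1 k) //=.
apply: ltr_leD.
  by rewrite ltr_pM2r ?HD // exprn_gt0 // normr_gt0.
apply: ler_sum => j _; rewrite ler_wpM2r ?exprn_ge0 // ltW //.
Qed.
Definition half : rat := 1 / 2%:R.

Lemma half_gt0 : 0 < half. Proof. by []. Qed.
Lemma halfD : half + half = 1. Proof. by []. Qed.

Lemma round_lb (t : rat) : - half <= t - (floor (t + half))%:~R.
Proof. by rewrite lerBrDr -lerBrDl opprK addrC floor_le. Qed.

Lemma round_ub (t : rat) : t - (floor (t + half))%:~R < half.
Proof.
rewrite ltrBlDr (_ : half + _ = (floor (t + half) + 1)%:~R - half).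
  by rewrite ltrBrDr floorD1_gt.
by rewrite intrD -halfD addrA addrK addrC.
Qed.

Lemma round0 (t : rat) : `|t| < half -> floor (t + half) = 0.
Proof.
rewrite ltr_norml => /andP[h1 h2].
apply/eqP; rewrite eq_le floor_le0 floor_ge0; apply/andP; split.
  by rewrite -halfD ltrD2r.
by rewrite -lerBlDr sub0r ; exact: ltW.
Qed.

Lemma sq_le_quarter (y : rat) : - half <= y -> y < half -> y ^+ 2 <= half ^+ 2.
Proof.
move=> h1 h2; rewrite -real_normK ?num_real //.
rewrite ler_pXn2r ?inE ?normr_ge0 //; first
  by rewrite ler_norml h1 /= ltW.
by rewrite qualifE /= normr_ge0.
Qed.

Lemma sqB_le (a b : rat) : (a - b) ^+ 2 <= 2%:R * a ^+ 2 + 2%:R * b ^+ 2.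
Proof.
rewrite -subr_ge0.
have -> : 2%:R * a ^+ 2 + 2%:R * b ^+ 2 - (a - b) ^+ 2 = (a + b) ^+ 2.
  apply/eqP; rewrite subr_eq sqrrB sqrrD !mulr_natl.
  set X := a ^+ 2; set Y := b ^+ 2; set Z := a * b *+ 2.
  rewrite [X + Z + Y + _]addrACA [X + Z + _]addrACA subrr addr0 !mulr2n //.
by rewrite sqr_ge0.
Qed.

Definition toq (z : int) : rat := z%:~R.
Definition Aq n (A : 'M[int]_n) : 'M[rat]_n := map_mx toq A.
Definition vq n (x : 'cV[int]_n) : 'cV[rat]_n := map_mx toq x.
Definition Qq n (v : 'cV[rat]_n) : rat := \sum_i v i 0 ^+ 2.
Definition Qn n (x : 'cV[int]_n) : nat := \sum_i expn (absz (x i ord0)) 2.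

Lemma mxC_Aq n (A : 'M[int]_n) : map_mx ratr (Aq A) = mxC A.
Proof. by rewrite -map_mx_comp; apply: eq_map_mx => z /=; rewrite ratr_int. Qed.

Lemma vecC_vq n (x : 'cV[int]_n) : map_mx ratr (vq x) = vecC x.
Proof. by rewrite -map_mx_comp; apply: eq_map_mx => z /=; rewrite ratr_int. Qed.

Lemma sum_ratr n (v : 'cV[rat]_n) :
  \sum_i `|(map_mx ratr v : 'cV[algC]_n) i 0| ^+ 2 = ratr (Qq v).
Proof.
rewrite /Qq rmorph_sum; apply: eq_bigr => i _.
by rewrite mxE -ratr_norm -rmorphXn real_normK ?num_real.
Qed.

Lemma lemLq n (A : 'M[int]_n) :
  (forall s : algC, singular_value A s -> 2%:R * sqrtC n%:R < s) ->
  forall v : 'cV[rat]_n, v != 0 -> 4%:R * n%:R * Qq v < Qq (Aq A *m v).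
Proof.
move=> Hs v v0.
have := lemL Hs (z := map_mx ratr v).
rewrite map_mx_eq0 v0 -mxC_Aq -map_mxM !sum_ratr => /(_ isT).
have e : (4%:R * n%:R : algC) = ratr (4%:R * n%:R) by rewrite rmorphM !rmorph_nat.
by rewrite e -rmorphM ltr_rat.
Qed.

Lemma Qn_Qq n (x : 'cV[int]_n) : (Qn x)%:R = Qq (vq x).
Proof.
rewrite /Qn /Qq natr_sum; apply: eq_bigr => i _.
by rewrite natrX natr_absz intr_norm real_normK ?num_real // mxE.
Qed.

Lemma Aq_unit n (A : 'M[int]_n) : dilation A -> Aq A \in unitmx.
Proof.
move=> Hd; rewrite unitmxE unitfE det_map_mx /toq intr_eq0.
apply/negP => /eqP d0.
have : eigenvalue (mxC A) 0.
  by rewrite eigenvalue_root_char rootE horner_coef0 char_poly_det det_map_mx d0 mulr0.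
by move/Hd; rewrite normr0 ltr10.
Qed.

Lemma arith (t : rat) (n : nat) : (0 < n)%N -> half ^+ 2 <= t ->
  2%:R * t + (2%:R * half ^+ 2) *+ n <= 4%:R * n%:R * t.
Proof.
move=> n0 ht.
have t0 : 0 <= t by apply: le_trans ht; rewrite sqr_ge0.
have -> : 4%:R * n%:R * t = 2%:R * n%:R * t + 2%:R * n%:R * t.
  by rewrite -mulrDl -mulrDl -natrD.
apply: lerD.
  rewrite -mulrA ler_pM2l // -{1}(mul1r t) ler_wpM2r // ler1n //.
rewrite -mulr_natr [2%:R * _ * n%:R]mulrAC ler_wpM2l // mulr_ge0 //.
Qed.

Definition zq n (A : 'M[int]_n) x := invmx (Aq A) *m vq x.
Definition xp n (A : 'M[int]_n) x : 'cV[int]_n := \col_i floor (zq A x i 0 + half).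
Definition dg n (A : 'M[int]_n) x := x - A *m xp A x.

Lemma ratr_real (q : rat) : (ratr q : algC) \is Num.real.
Proof.
case: (lerP 0 q) => h; first by apply: ger0_real; rewrite ler0q.
by apply: ler0_real; rewrite lerq0 ltW.
Qed.

Lemma digit_dg n (A : 'M[int]_n) x : Aq A \in unitmx -> digit A (dg A x).
Proof.
move=> Hu.
exists (map_mx ratr (zq A x - vq (xp A x))); split.
  move=> i; rewrite mxE.
  set t := (zq A x - vq (xp A x)) i 0.
  have et : t = zq A x i 0 - (floor (zq A x i 0 + half))%:~R by rewrite /t !mxE.
  have eh : (1 / 2%:R : algC) = ratr half by rewrite fmorph_div rmorph1 rmorph_nat.
  rewrite eh -rmorphN ler_rat ltr_rat ratr_real et round_lb round_ub //.
rewrite -mxC_Aq -map_mxM -vecC_vq; congr (map_mx ratr _).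
by rewrite mulmxBr /zq mulmxA mulmxV // mul1mx /dg /vq /Aq /toq map_mxB map_mxM.
Qed.

Lemma Qq0 n : Qq (0 : 'cV[rat]_n) = 0.
Proof. by rewrite /Qq big1 // => i _; rewrite mxE expr0n. Qed.

Lemma Qq_ge0 n (v : 'cV[rat]_n) : 0 <= Qq v.
Proof. by apply: sumr_ge0 => i _; rewrite sqr_ge0. Qed.

Lemma Qq_term n (v : 'cV[rat]_n) i : v i 0 ^+ 2 <= Qq v.
Proof.
rewrite /Qq (bigD1 i) //= lerDl; apply: sumr_ge0 => j _; exact: sqr_ge0.
Qed.

Lemma Qn_dec n (A : 'M[int]_n) x :
  (forall s : algC, singular_value A s -> 2%:R * sqrtC n%:R < s) ->
  Aq A \in unitmx -> x != 0 -> (Qn (xp A x) < Qn x)%N.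
Proof.
move=> Hs Hu x0.
rewrite -(ltr_nat rat) !Qn_Qq.
set z := zq A x.
have hx : Aq A *m z = vq x by rewrite /z /zq mulmxA mulmxV // mul1mx.
have xi : forall i, vq (xp A x) i 0 = (floor (z i 0 + half))%:~R.
  by move=> i; rewrite !mxE.
have [i xi0] : exists i, x i 0 != 0.
  apply/existsP; apply: contraNT x0 => /existsPn H.
  by apply/eqP/colP => j; rewrite mxE; apply/eqP; rewrite -[_ == _]negbK H.
have Qx : 0 < Qq (vq x).
  rewrite /Qq (bigD1 i) //= ltr_wpDr // ?sumr_ge0 // => [j _|]; first exact: sqr_ge0.
  by rewrite mxE /toq exprn_even_gt0 // intr_eq0 xi0.
case: (ltrP (Qq z) (half ^+ 2)) => hz.
  have -> : xp A x = 0.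
    apply/colP => j; rewrite /xp mxE [RHS]mxE; apply: round0.
    rewrite -(ltr_pXn2r (n := 2)) // ?qualifE /= ?normr_ge0 //.
    by rewrite real_normK ?num_real // (le_lt_trans (Qq_term _ _)).
  have -> : vq (0 : 'cV[int]_n) = 0 by apply/colP => j; rewrite !mxE.
  by rewrite Qq0.
have z0 : z != 0.
  by apply: contraTneq hz => ->; rewrite Qq0 -ltNge exprn_gt0.
have hL := lemLq Hs z0; rewrite hx in hL.
apply: le_lt_trans hL.
apply: le_trans (arith _ _) => //; last by case: (n) i {xi xi0 Hs Hu hx} => [[]|].
rewrite /Qq (_ : (2%:R * half ^+ 2) *+ n = \sum_(j < n) 2%:R * half ^+ 2);
  last by rewrite sumr_const card_ord.
rewrite mulr_sumr -big_split /=.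
apply: ler_sum => j _; rewrite xi.
set f := (floor (z j 0 + half))%:~R.
have -> : f = z j 0 - (z j 0 - f) by rewrite opprB addrC subrK.
apply: le_trans (sqB_le _ _) _; rewrite lerD2l ler_pM2l //.
by apply: sq_le_quarter; [apply: round_lb | apply: round_ub].
Qed.

Theorem mainTheorem6 (n : nat) (A : 'M[int]_n) :
  dilation A ->
  (forall s : algC, singular_value A s -> 2%:R * sqrtC n%:R < s) ->
  forall x : 'cV[int]_n,
    exists (N : nat) (d : 'I_N.+1 -> 'cV[int]_n),
      (forall j, digit A (d j)) /\
      x = \sum_(j < N.+1) mxpow A j *m d j.
Proof.
move=> Hd Hs x.
have Hu := Aq_unit Hd.
suff H : forall k (x : 'cV[int]_n), (Qn x < k)%N -> exists (N : nat) (d : 'I_N.+1 -> 'cV[int]_n),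
      (forall j, digit A (d j)) /\ x = \sum_(j < N.+1) mxpow A j *m d j.
  exact: (H (Qn x).+1).
elim=> [//|k IH] {}x hk.
have [->|x0] := eqVneq x 0.
  exists 0%N, (fun _ => 0); split.
    move=> _; exists 0; split; last by rewrite mulmx0 /vecC map_mx0.
    move=> i; rewrite mxE real0.
    have h : (0:algC) < 1 / 2%:R by rewrite divr_gt0 // ltr0n.
    by split=> //; split; [rewrite oppr_le0 ltW | exact: h].
  by rewrite big_ord1 mulmx0.
have hx : (Qn (xp A x) < k)%N.
  by apply: leq_trans (Qn_dec Hs Hu x0) _; rewrite -ltnS.
have [N [d [dd ex]]] := IH _ hx.
exists N.+1, (fun j => if unlift ord0 j is Some j' then d j' else dg A x); split.
  by move=> j; case: (unlift ord0 j) => [j'|]; [apply: dd | apply: digit_dg].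
rewrite big_ord_recl unlift_none.
under eq_bigr => i _ do rewrite liftK.
rewrite /= mul1mx.
have -> : \sum_(i < N.+1) mxpow A (lift ord0 i) *m d i = A *m (xp A x).
  rewrite ex mulmx_sumr; apply: eq_bigr => i _.
  by rewrite mulmxA.
by rewrite /dg subrK.
Qed.
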